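(* A subset $\mathcal R$ of $\mathcal G$ is a $Z$-regulus if and only if the following three conditions hold: (D1) the elements of $\mathcal R$ are mutually distant and $|\mathcal R|\ge 3$; (D2) whenever $E_0,E_1,E_2\in\mathcal R$ are mutually distinct and $W\in\mathcal G$ is adjacent to $E_0$ and not distant from $E_1$ and not distant from $E_2$, then $W$ is not distant from any $E\in\mathcal R$; (D3) $\mathcal R$ is not properly contained in any subset of $\mathcal G$ satisfying (D1) and (D2).
   Context: $K$ is a (not necessarily commutative) field with centre $Z$, and $V$ is a left vector space over $K$ of arbitrary (possibly infinite) dimension with $\dim V>2$. $\mathcal G:=\{X\le V\mid X\cong V/X\}$, assumed nonempty. Points are $1$-dimensional and lines $2$-dimensional subspaces; two subspaces meet if they have a common point. $X,Y\in\mathcal G$ are adjacent if $\dim((X+Y)/X)=\dim((X+Y)/Y)=1$, and distant if $V=X\oplus Y$. A $Z$-regulus is a subset $\mathcal R\subseteq\mathcal G$ such that (R1) its elements are mutually distant and $|\mathcal R|\ge3$; (R2) if a line meets three mutually distinct elements of $\mathcal R$ then it meets all elements of $\mathcal R$; (R3) $\mathcal R$ is not properly contained in any subset of $\mathcal G$ satisfying (R1) and (R2). *)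

(* Defs.v *)
From mathcomp Require Import all_boot all_algebra.
Set Implicit Arguments. Unset Strict Implicit. Unset Printing Implicit Defensive.
Import GRing.Theory.
Local Open Scope ring_scope.

Definition division_ring (K : unitRingType) : Prop :=
  forall x : K, x != 0 -> x \is a GRing.unit.

Section Defs.
Variables (K : unitRingType) (V : lmodType K).

Definition subsp := V -> Prop.

Definition is_subspace (X : subsp) : Prop :=
  X 0 /\ forall (a : K) (x y : V), X x -> X y -> X (a *: x + y).

Definition sincl (X Y : subsp) : Prop := forall v, X v -> Y v.

Definition ssum (X Y : subsp) : subsp := fun v => exists x y, X x /\ Y y /\ v = x + y.
Definition sspan1 (v : V) : subsp := fun w => exists a : K, w = a *: v.

Definition dim_gt2 : Prop :=
  exists u v w : V, forall a b c : K, a *: u + b *: v + c *: w = 0 -> [/\ a = 0, b = 0 & c = 0].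

Definition is_point (P : subsp) : Prop := exists v : V, v != 0 /\ P = sspan1 v.
Definition is_line (L : subsp) : Prop :=
  exists u w : V, (forall a b : K, a *: u + b *: w = 0 -> a = 0 /\ b = 0) /\
    L = (fun x => exists a b : K, x = a *: u + b *: w).

Definition meets (X Y : subsp) : Prop :=
  exists P, is_point P /\ sincl P X /\ sincl P Y.

(* X \cong V/X, via the first isomorphism theorem: a linear surjection V -> X with kernel X *)
Definition iso_quot (X : subsp) : Prop :=
  exists f : V -> V,
    (forall u v, f (u + v) = f u + f v) /\ (forall (a : K) v, f (a *: v) = a *: f v) /\
    (forall w, X w <-> exists v, f v = w) /\ (forall v, f v = 0 <-> X v).

Definition inG (X : subsp) : Prop := is_subspace X /\ iso_quot X.

Definition codim1 (X S : subsp) : Prop :=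
  sincl X S /\ exists v, S v /\ ~ X v /\ S = ssum X (sspan1 v).

Definition adjacent (X Y : subsp) : Prop :=
  codim1 X (ssum X Y) /\ codim1 Y (ssum X Y).

Definition distant (X Y : subsp) : Prop :=
  (forall v, X v -> Y v -> v = 0) /\ (forall v, ssum X Y v).

Definition subsetG (R : subsp -> Prop) : Prop := forall X, R X -> inG X.

Definition R1 (R : subsp -> Prop) : Prop :=
  (forall X Y, R X -> R Y -> X <> Y -> distant X Y) /\
  exists X Y Z, [/\ R X, R Y, R Z & [/\ X <> Y, X <> Z & Y <> Z]].

Definition R2 (R : subsp -> Prop) : Prop :=
  forall L, is_line L -> forall E0 E1 E2, R E0 -> R E1 -> R E2 ->
    E0 <> E1 -> E0 <> E2 -> E1 <> E2 ->
    meets L E0 -> meets L E1 -> meets L E2 ->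
    forall E, R E -> meets L E.

Definition R3 (R : subsp -> Prop) : Prop :=
  forall S, subsetG S -> R1 S -> R2 S -> (forall X, R X -> S X) -> S = R.

Definition Z_regulus (R : subsp -> Prop) : Prop :=
  [/\ subsetG R, R1 R, R2 R & R3 R].

Definition D1 := R1.

Definition D2 (R : subsp -> Prop) : Prop :=
  forall E0 E1 E2, R E0 -> R E1 -> R E2 ->
    E0 <> E1 -> E0 <> E2 -> E1 <> E2 ->
    forall W, inG W -> adjacent W E0 -> ~ distant W E1 -> ~ distant W E2 ->
    forall E, R E -> ~ distant W E.

Definition D3 (R : subsp -> Prop) : Prop :=
  forall S, subsetG S -> D1 S -> D2 S -> (forall X, R X -> S X) -> S = R.

End Defs.

(* Main.v *)
Require Import Defs.
From mathcomp Require Import all_boot all_algebra.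
From mathcomp Require classical_sets.
From Stdlib Require Import Classical FunctionalExtensionality PropExtensionality IndefiniteDescription.
Set Implicit Arguments. Unset Strict Implicit. Unset Printing Implicit Defensive.
Import GRing.Theory.
Local Open Scope ring_scope.

Section Work.
Variables (K : unitRingType) (V : lmodType K).
Hypothesis hK : division_ring K.

Lemma pext (P Q : subsp V) : (forall v, P v <-> Q v) -> P = Q.
Proof. move=> h; apply: functional_extensionality => v; apply: propositional_extensionality; exact: h. Qed.

Lemma invK (c : K) : c != 0 -> c^-1 * c = 1.
Proof. by move=> /hK; apply: mulVr. Qed.
Lemma Kinv (c : K) : c != 0 -> c * c^-1 = 1.
Proof. by move=> /hK; apply: mulrV. Qed.

Lemma scale_eq0 (c : K) (v : V) : c *: v = 0 -> c = 0 \/ v = 0.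
Proof.
case: (eqVneq c 0) => [->|hc] h; first by left.
right; by rewrite -[v]scale1r -(invK hc) -scalerA h scaler0.
Qed.

Lemma elim_id (x1 x2 v : V) (a1 a2 : K) : a2 != 0 ->
  (x1 + a1 *: v) - (a1 * a2^-1) *: (x2 + a2 *: v) = x1 - (a1 * a2^-1) *: x2.
Proof.
move=> h; rewrite scalerDr scalerA -mulrA invK // mulr1 opprD addrACA subrr addr0 //.
Qed.

Section Sub.
Variable X : subsp V.
Hypothesis hX : is_subspace X.
Lemma sub0 : X 0. Proof. by case: hX. Qed.
Lemma subD x y : X x -> X y -> X (x + y).
Proof. move=> hx hy; have := hX.2 1 x y hx hy; by rewrite scale1r. Qed.
Lemma subZ a x : X x -> X (a *: x).
Proof. move=> hx; have := hX.2 a x 0 hx sub0; by rewrite addr0. Qed.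
Lemma subN x : X x -> X (- x).
Proof. rewrite -scaleN1r; exact: subZ. Qed.
Lemma subB x y : X x -> X y -> X (x - y).
Proof. move=> hx hy; apply: subD => //; exact: subN. Qed.
End Sub.

Definition span2 (x y v : V) := exists a b : K, v = a *: x + b *: y.

Lemma dep2 (y u v : V) (b1 b2 : K) : u = b1 *: y -> v = b2 *: y ->
  exists a b : K, a *: u + b *: v = 0 /\ (a != 0 \/ b != 0).
Proof.
move=> -> ->; case: (eqVneq b1 0) => [->|h].
  exists 1, 0; rewrite !scale0r scaler0 addr0; split=> //; left; exact: oner_neq0.
exists (- (b2 * b1^-1)), 1; split; last by right; exact: oner_neq0.
by rewrite scale1r !scalerA mulNr -mulrA invK // mulr1 scaleNr addNr.
Qed.

Lemma dep3_core (x y u v w : V) (a1 b1 : K) : a1 != 0 -> u = a1 *: x + b1 *: y ->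
  span2 x y v -> span2 x y w ->
  exists a b c : K, a *: u + b *: v + c *: w = 0 /\ (a != 0 \/ b != 0 \/ c != 0).
Proof.
move=> ha hu [a2 [b2 hv]] [a3 [b3 hw]].
set c2 := a2 * a1^-1; set c3 := a3 * a1^-1.
have ev : v - c2 *: u = (b2 - c2 * b1) *: y.
  rewrite hv hu [a2 *: x + _]addrC [a1 *: x + _]addrC elim_id //.
  by rewrite scalerBl scalerA.
have ew : w - c3 *: u = (b3 - c3 * b1) *: y.
  rewrite hw hu [a3 *: x + _]addrC [a1 *: x + _]addrC elim_id //.
  by rewrite scalerBl scalerA.
have [al [be [h1 h2]]] := dep2 ev ew.
exists (- (al * c2 + be * c3)), al, be; split; last by right.
rewrite -h1 !scalerBr !scalerA scaleNr scalerDl opprD.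
by rewrite [RHS]addrACA -[LHS]addrA [LHS]addrC.
Qed.

Lemma dep3 (x y u v w : V) : span2 x y u -> span2 x y v -> span2 x y w ->
  exists a b c : K, a *: u + b *: v + c *: w = 0 /\ (a != 0 \/ b != 0 \/ c != 0).
Proof.
move=> hu hv hw.
case: (hu) => [a1 [b1 eu]]; case: (hv) => [a2 [b2 ev]]; case: (hw) => [a3 [b3 ew]].
case: (eqVneq a1 0) => h1; last exact: dep3_core h1 eu hv hw.
case: (eqVneq a2 0) => h2.
  have eu' : u = b1 *: y by rewrite eu h1 scale0r add0r.
  have ev' : v = b2 *: y by rewrite ev h2 scale0r add0r.
  have [a [b [e1 e2]]] := dep2 eu' ev'.
  exists a, b, 0; rewrite scale0r addr0; split; first exact: e1.
  by case: e2; auto.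
have [a [b [c [e1 e2]]]] := dep3_core h2 ev hu hw.
exists b, a, c; split; first by rewrite -e1 [b *: u + _]addrC.
by case: e2 => [?|[?|?]]; auto.
Qed.

Section Adj.
Variables (E0 W : subsp V).
Hypotheses (hE0 : is_subspace E0) (hW : is_subspace W) (hadj : adjacent W E0).

Lemma adj_w : exists w, W w /\ ~ E0 w.
Proof.
case: hadj => _ [_ [v1 [[x [y [hx [hy ->]]]] [nE0 _]]]].
exists x; split=> // hx0; apply: nE0; exact: subD.
Qed.

Lemma adj_dec w : W w -> ~ E0 w -> forall w', W w' -> exists c, E0 (w' - c *: w).
Proof.
case: hadj => _ [_ [v1 [_ [nE0 eS]]]] hw nw w' hw'.
have inS u : W u -> ssum W E0 u.
  by move=> hu; exists u, 0; rewrite addr0; split=> //; split=> //; exact: sub0.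
move: (inS _ hw) (inS _ hw') nw; rewrite eS.
move=> [x0 [y0 [hx0 [[a0 ->] ->]]]] [x1 [y1 [hx1 [[a1 ->] ->]]]] nw.
have ha0 : a0 != 0.
  apply/eqP=> h0; apply: nw; rewrite h0 scale0r addr0 //.
exists (a1 * a0^-1); rewrite elim_id //; apply: subB => //; exact: subZ.
Qed.

Lemma adj_hyp z : E0 z -> ~ W z -> forall x, E0 x -> exists c, W (x - c *: z).
Proof.
case: hadj => [[_ [v0 [_ [nW eS]]]] _] hz nz x hx.
have inS u : E0 u -> ssum W E0 u.
  by move=> hu; exists 0, u; rewrite add0r; split=> //; exact: sub0.
move: (inS _ hz) (inS _ hx) nz; rewrite eS.
move=> [x0 [y0 [hx0 [[a0 ->] ->]]]] [x1 [y1 [hx1 [[a1 ->] ->]]]] nz.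
have ha0 : a0 != 0.
  apply/eqP=> h0; apply: nz; rewrite h0 scale0r addr0 //.
exists (a1 * a0^-1); rewrite elim_id //; apply: subB => //; exact: subZ.
Qed.

Lemma adj_self : dim_gt2 V -> ~ distant W E0.
Proof.
move=> [u [v [w hind]]] [hcap hsum].
have [w0 [hw0 nw0]] := adj_w.
have Wsp y : W y -> exists c, y = c *: w0.
  move=> hy; have [c hc] := adj_dec hw0 nw0 hy.
  exists c; apply/eqP; rewrite -subr_eq0; apply/eqP; apply: hcap => //.
  apply: subB => //; exact: subZ.
have [z hz] : exists z, forall x, E0 x -> exists c, x = c *: z.
  case: (classic (exists z, E0 z /\ ~ W z)) => [[z [hz nz]]|nex].
    exists z => x hx; have [c hc] := adj_hyp hz nz hx.
    exists c; apply/eqP; rewrite -subr_eq0; apply/eqP; apply: hcap => //.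
    apply: subB => //; exact: subZ.
  exists 0 => x hx; exists 0; rewrite scaler0; apply: hcap => //.
  by apply: NNPP => nx; apply: nex; exists x.
have sp t : span2 w0 z t.
  have [y [x [hy [hx ->]]]] := hsum t.
  have [a ->] := Wsp _ hy; have [b ->] := hz _ hx; by exists a, b.
have [a [b [c [e1 e2]]]] := dep3 (sp u) (sp v) (sp w).
have [ha hb hc] := hind _ _ _ e1.
by move: e2; rewrite ha hb hc eqxx; case=> [|[|]].
Qed.


Lemma adj_q E1 : is_subspace E1 -> distant E0 E1 -> ~ distant W E1 ->
  exists q, [/\ W q, E1 q, q != 0 &
    forall w', W w' -> exists c, W (w' - c *: q) /\ E0 (w' - c *: q)].
Proof.
move=> hE1 [cap01 sum01] nd.
have [w [hw nw]] := adj_w.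
have [a [b [ha [hb ew]]]] := sum01 w.
case: (classic (W a)) => Wa.
- have Wb : W b.
    have -> : b = w - a by rewrite ew [a + b]addrC addrK.
    exact: subB.
  exists b; split=> //.
    by apply/eqP => b0; apply: nw; rewrite ew b0 addr0.
  move=> w' hw'; have [c hc] := adj_dec hw nw hw'.
  exists c; have -> : w' - c *: b = (w' - c *: w) + c *: a.
    by rewrite ew scalerDr opprD addrA addrAC addrNK.
  split; apply: subD => //; try exact: subZ.
  apply: subB => //; exact: subZ.
- exfalso; apply: nd; split.
  + move=> v hv hv1; have [c hc] := adj_dec hw nw hv.
    have Wh : W (v - c *: w) by apply: subB => //; exact: subZ.
    have e1 : (v - c *: w) + c *: a = v - c *: b.
      by rewrite ew scalerDr opprD addrA addrAC addrNK.
    have z : (v - c *: w) + c *: a = 0.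
      apply: cap01; first by apply: subD => //; exact: subZ.
      by rewrite e1; apply: subB => //; exact: subZ.
    case: (eqVneq c 0) => hc0.
      by move: z; rewrite hc0 !scale0r subr0 addr0.
    exfalso; apply: Wa.
    have ca : c *: a = - (v - c *: w).
      by rewrite -[c *: a](addKr (v - c *: w)) z addr0.
    have -> : a = c^-1 *: (- (v - c *: w)) by rewrite -ca scalerA invK // scale1r.
    apply: subZ => //; exact: subN.
  + move=> v; have [x [y [hx [hy ->]]]] := sum01 v.
    have [c hc] := adj_hyp ha Wa hx.
    exists ((x - c *: a) + c *: w), (y - c *: b); split.
      by apply: subD => //; exact: subZ.
    split; first by apply: subB => //; exact: subZ.
    by rewrite ew scalerDr [x - _ + _]addrA addrNK addrACA subrr addr0.
Qed.

Lemma crit E1 F q (eF : V) : is_subspace E1 -> is_subspace F ->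
  distant E0 E1 -> distant F E0 -> W q -> E1 q -> q != 0 ->
  (forall w', W w' -> exists c, W (w' - c *: q) /\ E0 (w' - c *: q)) ->
  E0 eF -> F (eF + q) -> (~ distant W F <-> W eF).
Proof.
move=> hE1 hF [cap01 _] [capF0 sumF0] Wq E1q nq hq E0e Fe; split; last first.
  move=> We [capWF _]; move/eqP: nq; apply.
  have e0 : eF + q = 0 by apply: capWF => //; exact: subD.
  apply: cap01 => //.
  have -> : q = (eF + q) - eF by rewrite addrC addKr.
  by rewrite e0; apply: subB => //; exact: sub0.
move=> nd; apply: NNPP => nWe; apply: nd; split.
  move=> v hv hFv; have [c [Wh E0h]] := hq v hv.
  case: (eqVneq c 0) => hc0.
    by apply: capF0 => //; move: E0h; rewrite hc0 scale0r subr0.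
  exfalso; apply: nWe.
  have t0 : c^-1 *: (v - c *: q) - eF = 0.
    apply: capF0.
      have -> : c^-1 *: (v - c *: q) - eF = c^-1 *: v - (eF + q).
        by rewrite scalerBr scalerA invK // scale1r opprD addrA addrAC.
      by apply: subB => //; exact: subZ.
    by apply: subB => //; exact: subZ.
  have -> : eF = c^-1 *: (v - c *: q) by apply/eqP; rewrite eq_sym -subr_eq0 t0.
  exact: subZ.
move=> v; have [f [x [hf [hx ->]]]] := sumF0 v.
have [c hc] := adj_hyp E0e nWe hx.
exists ((x - c *: eF) - c *: q), (f + c *: (eF + q)); split.
  by apply: subB => //; exact: subZ.
split; first by apply: subD => //; exact: subZ.
by rewrite scalerDr -[x - _ - _]addrA -opprD addrACA addNr addr0 addrC.
Qed.

End Adj.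

Lemma line_sub (L : subsp V) : is_line L -> is_subspace L.
Proof.
move=> [u [w [_ ->]]]; split; first by exists 0, 0; rewrite !scale0r addr0.
move=> a x y [a1 [b1 ->]] [a2 [b2 ->]]; exists (a * a1 + a2), (a * b1 + b2).
by rewrite scalerDr !scalerA !scalerDl addrACA.
Qed.

Lemma meets_by (L X : subsp V) z : z != 0 -> is_subspace L -> is_subspace X ->
  L z -> X z -> meets L X.
Proof.
move=> nz hL hX Lz Xz; exists (sspan1 z); split; first by exists z.
by split=> v [a ->]; exact: subZ.
Qed.

Lemma R2_D2 (S : subsp V -> Prop) : dim_gt2 V -> subsetG S -> R1 S -> R2 S -> D2 S.
Proof.
move=> hdim hSG [hd _] hR2 E0 E1 E2 S0 S1 S2 n01 n02 n12 W [hW _] hadj nd1 nd2 E SE.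
have sp X : S X -> is_subspace X by move=> h; exact: (hSG X h).1.
case: (classic (E = E0)) => [->|nE0]; first exact: (adj_self (sp _ S0) hW hadj hdim).
case: (classic (E = E1)) => [->|nE1] //.
case: (classic (E = E2)) => [->|nE2] //.
have d01 := hd _ _ S0 S1 n01.
have [q [Wq E1q nq hq]] := adj_q (sp _ S0) hW hadj (sp _ S1) d01 nd1.
have eF F : S F -> F <> E0 -> exists e, E0 e /\ F (e + q).
  move=> SF nF; have [_ sum] := hd _ _ SF S0 nF.
  have [x [y [hx [hy eq]]]] := sum q.
  exists (- y); split; first exact: subN (sp _ S0) _ hy.
  by rewrite eq addrC addrK.
have n20 : E2 <> E0 by move=> h; apply: n02.
have [p [E0p E2pq]] := eF _ S2 n20.
have [e [E0e Eeq]] := eF _ SE nE0.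
have d20 := hd _ _ S2 S0 n20.
have dE0 := hd _ _ SE S0 nE0.
have Wp : W p := (crit (sp _ S0) hW hadj (sp _ S1) (sp _ S2) d01 d20 Wq E1q nq hq E0p E2pq).1 nd2.
apply/(crit (sp _ S0) hW hadj (sp _ S1) (sp _ SE) d01 dE0 Wq E1q nq hq E0e Eeq).
have [cap01 _] := d01.
have np : p != 0.
  apply/eqP=> p0; move/eqP: nq; apply.
  have [cap12 _] := hd _ _ S1 S2 n12; apply: cap12 => //.
  by move: E2pq; rewrite p0 add0r.
have ind : forall a b : K, a *: p + b *: q = 0 -> a = 0 /\ b = 0.
  move=> a b h.
  have bq : b *: q = - (a *: p) by rewrite -[b *: q](addKr (a *: p)) h addr0.
  have bq0 : b *: q = 0.
    apply: cap01; last exact: subZ (sp _ S1) _ _ E1q.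
    rewrite bq; apply: subN (sp _ S0) _ _; exact: subZ (sp _ S0) _ _ E0p.
  have b0 : b = 0 by case: (scale_eq0 bq0) => // q0; move/eqP: nq.
  move: h; rewrite b0 scale0r addr0 => /scale_eq0 [a0|p0] //; last by move/eqP: np.
set L := fun v => exists a b : K, v = a *: p + b *: q.
have hL : is_line L by exists p, q; split.
have Lsub := line_sub hL.
have Lp : L p by exists 1, 0; rewrite scale1r scale0r addr0.
have Lq : L q by exists 0, 1; rewrite scale1r scale0r add0r.
have Lpq : L (p + q) by exists 1, 1; rewrite !scale1r.
have npq : p + q != 0.
  apply/eqP=> h; have := ind 1 1; rewrite !scale1r => /(_ h) [] /eqP.
  by rewrite oner_eq0.
have m0 : meets L E0 := meets_by np Lsub (sp _ S0) Lp E0p.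
have m1 : meets L E1 := meets_by nq Lsub (sp _ S1) Lq E1q.
have m2 : meets L E2 := meets_by npq Lsub (sp _ S2) Lpq (E2pq).
have [P [[z [nz ->]] [PL PE]]] := hR2 L hL E0 E1 E2 S0 S1 S2 n01 n02 n12 m0 m1 m2 E SE.
have zz : sspan1 z z by exists 1; rewrite scale1r.
have [al [be ez]] := PL z zz.
have Ez := PE z zz.
have [capE0 _] := dE0.
case: (eqVneq be 0) => hbe.
  exfalso; move/eqP: nz; apply; apply: capE0 => //.
  by rewrite ez hbe scale0r addr0; exact: subZ (sp _ S0) _ _ E0p.
have t0 : (be^-1 * al) *: p - e = 0.
  apply: capE0.
    have <- : be^-1 *: z - (e + q) = (be^-1 * al) *: p - e.
      by rewrite ez scalerDr !scalerA invK // scale1r opprD addrACA subrr addr0.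
    apply: subB (sp _ SE) _ _ _ Eeq; exact: subZ (sp _ SE) _ _ Ez.
  apply: subB (sp _ S0) _ _ _ E0e; exact: subZ (sp _ S0) _ _ E0p.
have -> : e = (be^-1 * al) *: p by apply/eqP; rewrite eq_sym -subr_eq0 t0.
exact: subZ.
Qed.

Lemma span_sub (u w : V) : is_subspace (span2 u w).
Proof.
split; first by exists 0, 0; rewrite !scale0r addr0.
move=> a x y [a1 [b1 ->]] [a2 [b2 ->]]; exists (a * a1 + a2), (a * b1 + b2).
by rewrite scalerDr !scalerA !scalerDl addrACA.
Qed.

Definition good (p d e : V) (A : subsp V) := [/\ is_subspace A, A p, A d & ~ A e].

Lemma zorn_max (p d e : V) : ~ span2 p d e ->
  exists M : subsp V, good p d e M /\ forall v, exists c, M (v - c *: e).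
Proof.
move=> nspan.
pose P := fun A : subsp V => A = (fun _ => False) \/ good p d e A.
have := @classical_sets.Zorn_bigcup V P.
case.
  move=> F FP tot.
  have gF : forall X v, F X -> X v -> good p d e X.
    move=> X v FX Xv; case: (FP X FX) => // X0; by rewrite X0 in Xv.
  case: (classic (exists X, F X /\ good p d e X)) => [[X0 [FX0 gX0]]|nex].
    right; case: gX0 => [sX0 pX0 dX0 eX0]; split.
    - split; first by exists X0 => //; exact: sub0.
      move=> a x y [X1 FX1 X1x] [X2 FX2 X2y].
      have [s1 _ _ _] := gF _ _ FX1 X1x; have [s2 _ _ _] := gF _ _ FX2 X2y.
      case: (tot X1 X2 FX1 FX2) => sub.
        exists X2 => //; apply: s2.2 => //; exact: sub.
      exists X1 => //; apply: s1.2 => //; exact: sub.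
    - by exists X0.
    - by exists X0.
    - by move=> [X FX Xe]; have [_ _ _] := gF _ _ FX Xe; apply.
  left; apply: pext => v; split=> //; move=> [X FX Xv]; apply: nex; exists X; split=> //.
  exact: gF FX Xv.
move=> A [[A0|gA] maxA].
  exfalso; apply: (maxA (span2 p d)); last first.
    right; split; first exact: span_sub.
    - by exists 1, 0; rewrite scale1r scale0r addr0.
    - by exists 0, 1; rewrite scale1r scale0r add0r.
    - exact: nspan.
  split; first by rewrite A0.
  move=> h; suff : A p by rewrite A0.
  apply: h; by exists 1, 0; rewrite scale1r scale0r addr0.
exists A; split=> // v; apply: NNPP => nex.
case: gA => [sA pA dA eA].
pose B := fun x => exists m a, A m /\ x = m + a *: v.
have Av : ~ A v by move=> h; apply: nex; exists 0; rewrite scale0r subr0.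
apply: (maxA B); last first.
  right; split.
  - split; first by exists 0, 0; rewrite scale0r addr0; split=> //; exact: sub0.
    move=> a x y [m1 [a1 [hm1 ->]]] [m2 [a2 [hm2 ->]]].
    exists (a *: m1 + m2), (a * a1 + a2); split; first exact: sA.2.
    by rewrite scalerDr !scalerA scalerDl addrACA.
  - by exists p, 0; rewrite scale0r addr0.
  - by exists d, 0; rewrite scale0r addr0.
  - move=> [m [a [hm em]]]; case: (eqVneq a 0) => ha.
      by apply: eA; rewrite em ha scale0r addr0.
    apply: nex; exists a^-1.
    have -> : v - a^-1 *: e = - (a^-1 *: m).
      by rewrite em scalerDr scalerA invK // scale1r opprD addrA addrAC subrr add0r.
    apply: subN => //; exact: subZ.
split; first by move=> x hx; exists x, 0; rewrite scale0r addr0.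
move=> h; apply: Av; apply: h; exists 0, 1; by rewrite scale1r add0r; split=> //; exact: sub0.
Qed.

Section Build.
Variables (E0 M : subsp V) (e q : V).
Hypotheses (hE0 : inG E0) (hM : is_subspace M) (ne : ~ M e)
  (compl : forall v, exists c, M (v - c *: e)) (Md : M (q - e)) (E0e : E0 e).

Definition coef v : K := projT1 (constructive_indefinite_description _ (compl v)).
Lemma coef_spec v : M (v - coef v *: e).
Proof. exact: (projT2 (constructive_indefinite_description _ (compl v))). Qed.

Lemma coef_uniq v c : M (v - c *: e) -> coef v = c.
Proof.
move=> h; apply/eqP; rewrite -subr_eq0; apply/eqP.
have h2 : M ((coef v - c) *: e).
  have -> : (coef v - c) *: e = (v - c *: e) - (v - coef v *: e).
    by rewrite opprB [RHS]addrC [RHS]addrA addrNK scalerBl.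
  apply: subB => //; exact: coef_spec.
by case: (eqVneq (coef v - c) 0) => // hc; exfalso; apply: ne;
  rewrite -[e]scale1r -(invK hc) -scalerA; exact: subZ.
Qed.

Lemma coefD a v w : coef (a *: v + w) = a * coef v + coef w.
Proof.
apply: coef_uniq.
have -> : a *: v + w - (a * coef v + coef w) *: e = a *: (v - coef v *: e) + (w - coef w *: e).
  by rewrite scalerDl opprD addrACA scalerBr scalerA.
apply: hM.2; exact: coef_spec.
Qed.

Lemma coef_in v : M v -> coef v = 0.
Proof. by move=> h; apply: coef_uniq; rewrite scale0r subr0. Qed.

Lemma coef0 : coef 0 = 0.
Proof. apply: coef_in; exact: sub0. Qed.
Lemma coefA v w : coef (v + w) = coef v + coef w.
Proof. by have := coefD 1 v w; rewrite scale1r mul1r. Qed.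
Lemma coefZ a v : coef (a *: v) = a * coef v.
Proof. by have := coefD a v 0; rewrite addr0 coef0 addr0. Qed.
Lemma coefe : coef e = 1.
Proof. by apply: coef_uniq; rewrite scale1r subrr; exact: sub0. Qed.

Let d := q - e.
Lemma coefd : coef d = 0. Proof. exact: coef_in. Qed.
Lemma coefq : coef q = 1.
Proof. by have := coefA e d; rewrite /d addrC subrK coefe coefd addr0. Qed.

Definition sig v := v + coef v *: d.
Definition sinv v := v - coef v *: d.
Lemma coef_sig v : coef (sig v) = coef v.
Proof. by rewrite /sig coefA coefZ coefd mulr0 addr0. Qed.
Lemma coef_sinv v : coef (sinv v) = coef v.
Proof. by rewrite /sinv coefA -scaleNr coefZ coefd mulr0 addr0. Qed.
Lemma sinv_sig v : sinv (sig v) = v.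
Proof. by rewrite /sinv coef_sig /sig addrK. Qed.
Lemma sig_sinv v : sig (sinv v) = v.
Proof. by rewrite /sig coef_sinv /sinv subrK. Qed.
Lemma sigD x y : sig (x + y) = sig x + sig y.
Proof. by rewrite /sig coefA scalerDl addrACA. Qed.
Lemma sigZ a x : sig (a *: x) = a *: sig x.
Proof. by rewrite /sig coefZ [RHS]scalerDr scalerA. Qed.
Lemma sinvD x y : sinv (x + y) = sinv x + sinv y.
Proof. by rewrite /sinv coefA scalerDl opprD addrACA. Qed.
Lemma sinvZ a x : sinv (a *: x) = a *: sinv x.
Proof. by rewrite /sinv coefZ [RHS]scalerBr scalerA. Qed.

Definition Wb := fun v => E0 (sinv v).

Lemma Wb_inG : inG Wb.
Proof.
case: hE0 => sE0 [f0 [fD [fZ [fim fker]]]].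
split.
  split; first by rewrite /Wb /sinv coef0 scale0r subr0; exact: sub0.
  move=> a x y hx hy; rewrite /Wb sinvD sinvZ; exact: sE0.2.
exists (fun v => sig (f0 (sinv v))); split; first by move=> u v; rewrite sinvD fD sigD.
split; first by move=> a v; rewrite sinvZ fZ sigZ.
split.
  move=> w; split.
    move=> /fim [v0 hv0]; exists (sig v0); by rewrite sinv_sig hv0 sig_sinv.
  move=> [v <-]; rewrite /Wb sinv_sig; apply/fim; by exists (sinv v).
move=> v; rewrite /Wb -fker; split.
  by move=> h; rewrite -(sinv_sig (f0 (sinv v))) h /sinv coef0 scale0r subr0.
by move=> ->; rewrite /sig coef0 scale0r addr0.
Qed.

Lemma Wb_char v : Wb v <-> exists h c, [/\ M h, E0 h & v = h + c *: q].
Proof.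
case: hE0 => sE0 _.
split.
  move=> hv; exists (sinv v - coef v *: e), (coef v); split.
  - by have := coef_spec (sinv v); rewrite coef_sinv.
  - by apply: subB => //; exact: subZ.
  - rewrite -{1}(sig_sinv v) /sig coef_sinv /d scalerBr.
    by rewrite addrA addrAC.
move=> [h [c [Mh E0h ->]]].
rewrite /Wb /sinv coefA coefZ coefq coef_in // add0r mulr1 /d scalerBr opprB.
rewrite -addrA [c *: q + _]addrC subrK; apply: subD => //; exact: subZ.
Qed.

Lemma build_W : exists W, inG W /\ forall v, W v <-> exists h c, [/\ M h, E0 h & v = h + c *: q].
Proof. exists Wb; split; [exact: Wb_inG | exact: Wb_char]. Qed.

End Build.


Lemma D2_R2 (S : subsp V -> Prop) : subsetG S -> R1 S -> D2 S -> R2 S.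
Proof.
move=> hSG [hd _] hD2 L hL E0 E1 E2 S0 S1 S2 n01 n02 n12 m0 m1 m2 E SE.
apply: NNPP => nm.
have sp X : S X -> is_subspace X by move=> h; exact: (hSG X h).1.
have nE0 : E <> E0 by move=> h; apply: nm; rewrite h.
have nE1 : E <> E1 by move=> h; apply: nm; rewrite h.
have nE2 : E <> E2 by move=> h; apply: nm; rewrite h.
have sE0 := sp _ S0; have sE1 := sp _ S1; have sE2 := sp _ S2; have sE := sp _ SE.
have [cap01 _] := hd _ _ S0 S1 n01.
have dE0 := hd _ _ SE S0 nE0.
have [capE0 sumE0] := dE0.
have Lsub := line_sub hL.
have pt X : meets L X -> exists z, [/\ z != 0, L z & X z].
  move=> [P [[z [nz ->]] [PL PX]]]; exists z; split => //.
    by apply: PL; exists 1; rewrite scale1r.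
  by apply: PX; exists 1; rewrite scale1r.
have [p [np Lp E0p]] := pt _ m0.
have [q [nq Lq E1q]] := pt _ m1.
have [r [nr Lr E2r]] := pt _ m2.
have [x [y [hx [hy eq]]]] := sumE0 q.
set e := - y.
have E0e : E0 e by exact: subN.
have Eeq : E (e + q) by rewrite /e eq addrC addrK.
have q_notE0 : forall c, E0 (c *: q) -> c = 0.
  move=> c h; have : c *: q = 0 by apply: cap01 => //; exact: subZ.
  by case/scale_eq0 => // q0; move/eqP: nq.
have nsp : ~ span2 p (q - e) e.
  move=> [a [b he]].
  have bq : b *: q = e - a *: p + b *: e.
    by rewrite {1}he scalerBr [a *: p + _]addrC addrK subrK.
  have b0 : b = 0.
    apply: q_notE0; rewrite bq; apply: (subD sE0); last exact: subZ.
    by apply: subB => //; exact: subZ.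
  move: he; rewrite b0 scale0r addr0 => he.
  apply: nm; apply: (meets_by (z := e + q)) => //.
  - apply/eqP => h0; move/eqP: nq; apply.
    have -> : q = - e by rewrite -[q](addKr e) h0 addr0.
    have := q_notE0 1; rewrite scale1r => h1.
    have : (1 : K) = 0 by apply: h1; rewrite -[q](addKr e) h0 addr0; exact: subN.
    by move/eqP; rewrite oner_eq0.
  - by rewrite he; apply: subD => //; exact: subZ.
have [M [[hM Mp Md ne] compl]] := zorn_max nsp.
have [W [hWG Wc]] := build_W (hSG _ S0) hM ne compl Md E0e.
have hW := hWG.1.
have Wq : W q by apply/Wc; exists 0, 1; rewrite scale1r add0r; split=> //; exact: sub0.
have Wp : W p by apply/Wc; exists p, 0; rewrite scale0r addr0.
have We0 : ~ W e.
  move/Wc=> [h [c [Mh E0h he]]]; apply: ne.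
  have c0 : c = 0.
    apply: q_notE0.
    have -> : c *: q = e - h by rewrite he addrC addKr.
    exact: subB.
  by rewrite he c0 scale0r addr0.
have hadj : adjacent W E0.
  split.
    split; first by move=> w hw; exists w, 0; rewrite addr0; split=> //; split=> //; exact: sub0.
    exists e; split; first by exists 0, e; rewrite add0r; split=> //; exact: sub0.
    split=> //; apply: pext => v; split.
      move=> [w [x' [hw [hx' ->]]]]; have [c hc] := compl x'.
      have Wx : W (x' - c *: e).
        apply/Wc; exists (x' - c *: e), 0; rewrite scale0r addr0; split=> //.
        by apply: subB => //; exact: subZ.
      exists (w + (x' - c *: e)), (c *: e); split; first exact: subD.
      by split; [exists c | rewrite -addrA subrK].
    move=> [w [y' [hw [[a ->] ->]]]]; exists w, (a *: e); split=> //; split=> //.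
    exact: subZ.
  split; first by move=> v hv; exists 0, v; rewrite add0r; split=> //; exact: sub0.
  exists q; split; first by exists q, 0; rewrite addr0; split=> //; split=> //; exact: (sub0 sE0).
  split.
    move=> h; have := q_notE0 1; rewrite scale1r => /(_ h) /eqP.
    by rewrite oner_eq0.
  apply: pext => v; split.
    move=> [w [x' [/Wc [h [c [Mh E0h ->]]] [hx' ->]]]].
    exists (h + x'), (c *: q); split; first exact: subD.
    by split; [exists c | rewrite addrAC].
  move=> [x' [y' [hx' [[a ->] ->]]]]; exists (a *: q), x'; split; first exact: subZ.
  by split=> //; rewrite addrC.
have nd1 : ~ distant W E1.
  by move=> [cap _]; move/eqP: nq; apply; apply: cap.
have nd2 : ~ distant W E2.
  move=> [cap _]; move/eqP: nr; apply; apply: cap => //.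
  case: (hL) => [u [w [_ eL]]].
  have spn t : L t -> span2 u w t by rewrite eL.
  have [a [b [c [e1 e2]]]] := dep3 (spn _ Lr) (spn _ Lp) (spn _ Lq).
  case: (eqVneq a 0) => ha.
    exfalso; move: e1; rewrite ha scale0r add0r => e1.
    have bp : b *: p = - (c *: q) by rewrite -[b *: p](addrK (c *: q)) e1 add0r.
    have bp0 : b *: p = 0.
      apply: cap01; first exact: subZ.
      by rewrite bp; apply: subN => //; exact: subZ.
    have b0 : b = 0 by case: (scale_eq0 bp0) => // p0; move/eqP: np.
    move: e1; rewrite b0 scale0r add0r => /scale_eq0 [c0|q0]; last by move/eqP: nq.
    by move: e2; rewrite ha b0 c0 eqxx; case=> [|[|]].
  have ar : a *: r = - (b *: p + c *: q).
    by rewrite -[a *: r](addKr (b *: p + c *: q)) [b *: p + c *: q + _]addrC [a *: r + _]addrA e1 addr0.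
  have -> : r = a^-1 *: (- (b *: p + c *: q)) by rewrite -ar scalerA invK // scale1r.
  apply: subZ => //; apply: subN => //; apply: subD => //; exact: subZ.
have dWE : distant W E.
  split.
    move=> v /Wc [h [c [Mh E0h ->]]] Ev.
    case: (eqVneq c 0) => hc.
      by move: Ev; rewrite hc scale0r addr0 => Eh; apply: capE0.
    exfalso; apply: ne.
    have t0 : c^-1 *: h - e = 0.
      apply: capE0; last by apply: subB => //; exact: subZ.
      have <- : c^-1 *: (h + c *: q) - (e + q) = c^-1 *: h - e.
        by rewrite scalerDr scalerA invK // scale1r opprD addrACA subrr addr0.
      by apply: subB => //; exact: subZ.
    have -> : e = c^-1 *: h by apply/eqP; rewrite eq_sym -subr_eq0 t0.
    exact: subZ.
  move=> v; have [x' [y' [hx' [hy' ->]]]] := sumE0 v.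
  have [c hc] := compl y'.
  exists ((y' - c *: e) - c *: q), (x' + c *: (e + q)); split.
    apply: subB => //; last exact: subZ.
    apply/Wc; exists (y' - c *: e), 0; rewrite scale0r addr0; split=> //.
    by apply: subB => //; exact: subZ.
  split; first by apply: subD => //; exact: subZ.
  by rewrite scalerDr -[y' - _ - _]addrA -opprD addrACA addNr addr0 addrC.
exact: (hD2 E0 E1 E2 S0 S1 S2 n01 n02 n12 W hWG hadj nd1 nd2 E SE dWE).
Qed.

End Work.

Theorem theorem4p10 (K : unitRingType) (V : lmodType K)
  (hK : division_ring K) (hdim : dim_gt2 V) (hG : exists X : subsp V, inG X)
  (R : subsp V -> Prop) (hR : subsetG R) :
  Z_regulus R <-> [/\ D1 R, D2 R & D3 R].
Proof.
split.
- case=> hRG h1 h2 h3; split => //.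
  + exact: (R2_D2 hK hdim hRG h1 h2).
  + move=> S hS s1 s2 sub; apply: h3 => //; exact: (D2_R2 hK hS s1 s2).
- case=> h1 h2 h3; split => //.
  + exact: (D2_R2 hK hR h1 h2).
  + move=> S hS s1 s2 sub; apply: h3 => //; exact: (R2_D2 hK hdim hS s1 s2).
Qed.
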